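(* Let $(X,Y)$ be a pair of real random variables whose marginal distributions are light-tailed. Then there exists a coupling of $(X,Y)$ with a pair $(\xi,\eta)$ of i.i.d. random variables whose common distribution is light-tailed, such that $$\max(X,Y)\le\min(\xi,\eta)\quad\text{a.s.}$$
   Context: A real random variable $Z$ (or its distribution) is light-tailed if $\mathbf E\,e^{cZ}<\infty$ for some constant $c>0$. *)

(* Defs.v *)
From HB Require Import structures.
From mathcomp Require Import all_boot all_order all_algebra.
From mathcomp Require Import all_classical all_reals all_analysis.
Set Implicit Arguments. Unset Strict Implicit. Unset Printing Implicit Defensive.
Import Order.TTheory GRing.Theory Num.Theory.
Local Open Scope classical_set_scope.
Local Open Scope ring_scope.

Definition light_tailed (d : measure_display) (T : measurableType d) (R : realType)
  (P : probability T R) (Z : T -> R) : Prop :=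
  exists c : R, 0 < c /\ (\int[P]_x (expR (c * Z x))%:E < +oo)%E.

Definition ident_distr (d : measure_display) (T : measurableType d) (R : realType)
  (P : probability T R) (Z1 Z2 : T -> R) : Prop :=
  forall A : set R, measurable A -> P (Z1 @^-1` A) = P (Z2 @^-1` A).

Definition indep2 (d : measure_display) (T : measurableType d) (R : realType)
  (P : probability T R) (Z1 Z2 : T -> R) : Prop :=
  forall A B : set R, measurable A -> measurable B ->
    P (Z1 @^-1` A `&` Z2 @^-1` B) = (P (Z1 @^-1` A) * P (Z2 @^-1` B))%E.

Definition same_joint_law (d : measure_display) (T : measurableType d)
  (d' : measure_display) (T' : measurableType d') (R : realType)
  (P : probability T R) (X Y : T -> R) (P' : probability T' R) (X' Y' : T' -> R) : Prop :=
  forall A : set (R * R)%type, measurable A ->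
    P' ((fun t => (X' t, Y' t)) @^-1` A) = P ((fun t => (X t, Y t)) @^-1` A).

(* Main.v *)
Require Import Defs.
From HB Require Import structures.
From mathcomp Require Import all_boot all_order all_algebra.
From mathcomp Require Import all_classical all_reals all_analysis.
From mathcomp Require Import ring lra.
Import Order.TTheory GRing.Theory Num.Theory.
Local Open Scope classical_set_scope.
Local Open Scope ring_scope.
Section Construction.
Context (R : realType) (d : measure_display) (T : measurableType d)
  (P : probability T R) (X Y : T -> R)
  (mX : measurable_fun setT X) (mY : measurable_fun setT Y).

Definition Nf (t : T) : nat := maxn (Num.truncn (X t)).+1 (Num.truncn (Y t)).+1.

Lemma Nf_ge t : Num.max (X t) (Y t) <= (Nf t)%:R.
Proof.
rewrite ge_max; apply/andP; split.
- apply: (le_trans (ltW (truncnS_gt (X t)))); by rewrite ler_nat leq_maxl.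
- apply: (le_trans (ltW (truncnS_gt (Y t)))); by rewrite ler_nat leq_maxr.
Qed.

Lemma mle (f : T -> R) a : measurable_fun setT f -> measurable [set t | a <= f t].
Proof.
move=> mf; rewrite (_ : [set t | a <= f t] = f @^-1` `[a, +oo[).
  by rewrite -[X in measurable X]setTI; apply: mf => //; exact: measurable_itv.
by apply/seteqP; split => t /=; rewrite in_itv /= andbT.
Qed.

Definition G k := [set t | (k <= Nf t)%N].

Lemma GE k : G k.+2 = [set t | k.+1%:R <= X t] `|` [set t | k.+1%:R <= Y t].
Proof.
apply/seteqP; split => t; rewrite /G /Nf /= leq_max !ltnS -!Num.Theory.truncn_gt_nat.
  by case/orP; [left|right].
by case=> ->; rewrite ?orbT.
Qed.

Lemma G1 : G 1 = setT.
Proof. by apply/seteqP; split => t //= _; rewrite /G /Nf /= leq_max. Qed.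

Lemma G0 : G 0 = setT.
Proof. by apply/seteqP; split => t //= _. Qed.

Lemma mG k : measurable (G k).
Proof.
case: k => [|[|k]]; first by rewrite G0.
  by rewrite G1.
by rewrite GE; apply: measurableU; apply: mle.
Qed.

Definition D n := [set t | Nf t = n].

Lemma DE n : D n = G n `\` G n.+1.
Proof.
apply/seteqP; split => t; rewrite /D /G /=.
  by move=> ->; split => //; rewrite ltnn.
by move=> [] h1 /negP; rewrite -ltnNge ltnS => h2; apply/eqP; rewrite eqn_leq h1 h2.
Qed.

Lemma mD n : measurable (D n).
Proof. by rewrite DE; apply: measurableD; apply: mG. Qed.

Lemma mNf : measurable_fun setT Nf.
Proof.
move=> _ S _; rewrite setTI (_ : Nf @^-1` S = \bigcup_(n in S) D n).
  by apply: bigcup_measurable => n _; exact: mD.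
by apply/seteqP; split => t /=; [move=> St; exists (Nf t)|move=> [n Sn /= ->]].
Qed.

Definition Q k : R := fine (P (G k)).

Lemma PG k : P (G k) = (Q k)%:E.
Proof. by rewrite fineK// fin_num_measure//; exact: mG. Qed.

Lemma Q_ge0 k : 0 <= Q k.
Proof. by rewrite -lee_fin -PG measure_ge0. Qed.

Lemma Q_le1 k : Q k <= 1.
Proof. by rewrite -lee_fin -PG probability_le1//; exact: mG. Qed.

Lemma Q0 : Q 0 = 1.
Proof. by apply/EFin_inj; rewrite -PG G0 probability_setT. Qed.

Lemma QS k : Q k.+1 <= Q k.
Proof.
rewrite -lee_fin -!PG; apply: le_measure; rewrite ?inE; try exact: mG.
by move=> t; rewrite /G /=; apply: ltnW.
Qed.

Definition q n := Q n - Q n.+1.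

Lemma PD n : P (D n) = (q n)%:E.
Proof.
have : P (G n) = P (D n) + P (G n.+1).
  rewrite -measureU; [|exact: mD|exact: mG|].
    congr (P _); rewrite DE; apply/seteqP; split => t /=.
      move=> h; case: (boolP (n.+1 <= Nf t)%N) => h2; first by right.
      by left; split => //; apply/negP.
    by case=> [[]//|]; apply: ltnW.
  by rewrite DE setDKI.
rewrite !PG => h; rewrite /q EFinB h.
rewrite addeK //; by rewrite fin_num_measure //; exact: mG.
Qed.

Definition r k := Num.sqrt (Q k).
Definition p k := r k - r k.+1.

Lemma r_ge0 k : 0 <= r k. Proof. exact: sqrtr_ge0. Qed.
Lemma r0 : r 0 = 1. Proof. by rewrite /r Q0 sqrtr1. Qed.
Lemma rS k : r k.+1 <= r k. Proof. by rewrite /r ler_sqrt ?QS ?Q_ge0. Qed.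
Lemma r2 k : r k ^+ 2 = Q k. Proof. by rewrite /r sqr_sqrtr// Q_ge0. Qed.
Lemma p_ge0 k : 0 <= p k. Proof. by rewrite /p subr_ge0 rS. Qed.

Lemma q_p n : q n = p n * (r n + r n.+1).
Proof. by rewrite /q -!r2 /p; ring. Qed.

Lemma q_ge0 n : 0 <= q n.
Proof. by rewrite q_p; apply: mulr_ge0; [exact: p_ge0|apply: addr_ge0; exact: r_ge0]. Qed.

Lemma q0_p0 n : q n = 0 -> p n = 0.
Proof.
rewrite q_p => /eqP; rewrite mulf_eq0 => /orP[/eqP//|].
rewrite paddr_eq0 ?r_ge0// => /andP[/eqP h1 /eqP h2].
by rewrite /p h1 h2 subr0.
Qed.

Definition c i j := p i * p j / q (minn i j).

Lemma c_ge0 i j : 0 <= c i j.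
Proof. by rewrite /c; apply: mulr_ge0; [apply: mulr_ge0; exact: p_ge0|rewrite invr_ge0; exact: q_ge0]. Qed.

Lemma c_q i j : c i j * q (minn i j) = p i * p j.
Proof.
have [h|h] := eqVneq (q (minn i j)) 0.
  rewrite h mulr0; have := q0_p0 _ h.
  by case: (leqP i j) => ij -> ; rewrite ?mul0r ?mulr0.
by rewrite /c mulfVK.
Qed.


Lemma markov_exp (f : T -> R) (b a : R) : measurable_fun setT f -> 0 < b ->
  (P [set t | (a <= f t)%R] * (expR (b * a))%:E <= \int[P]_x (expR (b * f x))%:E)%E.
Proof.
move=> mf b0.
have mA := mle f a mf.
rewrite -[X in P X]setIT -integral_indic// muleC.
rewrite -(@integralZl_indic _ _ _ P _ measurableT (fun _ => [set t | a <= f t]) (expR (b*a))) //; last first.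
  by move=> h; exfalso; move: h; rewrite ltNge expR_ge0.
apply: ge0_le_integral => //.
- apply/measurable_realfun.measurable_EFinP.
  exact: (measurableT_comp (measurable_realfun.mulrl_measurable _) (measurable_realfun.measurable_indic mA)).
- apply/measurable_realfun.measurable_EFinP.
  exact: (measurableT_comp (@measurable_realfun.measurable_expR R) (measurableT_comp (measurable_realfun.mulrl_measurable _) mf)).
- move=> x _; rewrite lee_fin indicE; case: (boolP (x \in _)) => [/set_mem /= h|_].
    by rewrite mulr1 ler_expR ler_pM2l.
  by rewrite mulr0 expR_ge0.
Qed.

Lemma markovR (f : T -> R) (b a : R) : measurable_fun setT f -> 0 < b ->
  (\int[P]_x (expR (b * f x))%:E < +oo)%E ->
  fine (P [set t | a <= f t]) <= fine (\int[P]_x (expR (b * f x))%:E)%E * expR (- (b * a)).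
Proof.
move=> mf b0 fI.
have h := markov_exp f b a mf b0.
have fP : P [set t | a <= f t] \is a fin_num by rewrite fin_num_measure //; exact: mle.
have fI' : (\int[P]_x (expR (b * f x))%:E)%E \is a fin_num.
  rewrite ge0_fin_numE //; apply: integral_ge0 => x _; by rewrite lee_fin expR_ge0.
move: h; rewrite -(fineK fP) -(fineK fI') -EFinM lee_fin => h.
by rewrite expRN ler_pdivlMr ?expR_gt0.
Qed.

Context (c1 c2 : R) (c1pos : 0 < c1) (c2pos : 0 < c2)
  (EX : (\int[P]_x (expR (c1 * X x))%:E < +oo)%E)
  (EY : (\int[P]_x (expR (c2 * Y x))%:E < +oo)%E).

Definition Ex := fine (\int[P]_x (expR (c1 * X x))%:E)%E.
Definition Ey := fine (\int[P]_x (expR (c2 * Y x))%:E)%E.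
Definition cc := Num.min c1 c2.
Definition w := expR (- (cc / 2)).

Lemma cc_gt0 : 0 < cc. Proof. by rewrite lt_min c1pos c2pos. Qed.

Lemma Ex_ge0 : 0 <= Ex.
Proof. by apply: fine_ge0; apply: integral_ge0 => x _; rewrite lee_fin expR_ge0. Qed.
Lemma Ey_ge0 : 0 <= Ey.
Proof. by apply: fine_ge0; apply: integral_ge0 => x _; rewrite lee_fin expR_ge0. Qed.

Lemma w2 : w ^+ 2 = expR (- cc).
Proof. by rewrite /w expr2 -expRD; congr expR; lra. Qed.

Lemma w_ge0 : 0 <= w. Proof. exact: expR_ge0. Qed.

Lemma QSS k : Q k.+2 <= (Ex + Ey) * (w ^+ 2) ^+ k.+1.
Proof.
have fP (f : T -> R) a : measurable_fun setT f -> P [set t | a <= f t] \is a fin_num.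
  by move=> mf; rewrite fin_num_measure //; exact: mle.
have h : Q k.+2 <= fine (P [set t | k.+1%:R <= X t]) + fine (P [set t | k.+1%:R <= Y t]).
  rewrite -lee_fin /Q GE EFinD !fineK ?fP //; last first.
    by rewrite fin_num_measure //; apply: measurableU; apply: mle.
  by apply: measureU2; apply: mle.
apply: (le_trans h).
have e : forall b, 0 < b -> cc <= b -> expR (- (b * k.+1%:R)) <= (w ^+ 2) ^+ k.+1.
  move=> b b0 cb; rewrite w2 -expRM_natl ler_expR.
  have hk : (0:R) <= k.+1%:R by [].
  nra.
rewrite mulrDl; apply: lerD.
  apply: (le_trans (markovR X c1 k.+1%:R mX c1pos EX)); apply: ler_wpM2l; first exact: Ex_ge0.
  by apply: e => //; rewrite ge_min lexx.
apply: (le_trans (markovR Y c2 k.+1%:R mY c2pos EY)); apply: ler_wpM2l; first exact: Ey_ge0.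
by apply: e => //; rewrite ge_min lexx orbT.
Qed.

Definition BB := (1 + Ex + Ey) * expR cc.
Definition KK := Num.sqrt BB.

Lemma E_ge0 : 0 <= Ex + Ey. Proof. by apply: addr_ge0; [exact: Ex_ge0|exact: Ey_ge0]. Qed.

Lemma BB_ge1 : 1 <= BB.
Proof.
have h1 : 1 <= expR cc by rewrite -expR0 ler_expR ltW // cc_gt0.
have := E_ge0; rewrite /BB; nra.
Qed.

Lemma Q_bound k : Q k <= BB * (w ^+ 2) ^+ k.
Proof.
have ez : expR cc * w ^+ 2 = 1 by rewrite w2 -expRD subrr expR0.
have E0 := E_ge0.
case: k => [|[|k]].
- by rewrite expr0 mulr1; exact: le_trans (Q_le1 0) BB_ge1.
- rewrite expr1 /BB -mulrA ez mulr1; apply: le_trans (Q_le1 1) _; lra.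
- apply: le_trans (QSS k) _.
  have -> : BB * (w ^+ 2) ^+ k.+2 = (1 + Ex + Ey) * (expR cc * w ^+ 2) * (w ^+ 2) ^+ k.+1.
    by rewrite /BB exprS; ring.
  rewrite ez mulr1; apply: ler_wpM2r; last lra.
  by apply: exprn_ge0; exact: sqr_ge0.
Qed.

Lemma BB_ge0 : 0 <= BB. Proof. exact: le_trans ler01 BB_ge1. Qed.
Lemma KK_ge0 : 0 <= KK. Proof. exact: sqrtr_ge0. Qed.

Lemma r_bound k : r k <= KK * w ^+ k.
Proof.
rewrite /r /KK.
apply: (@le_trans _ _ (Num.sqrt (BB * (w^+2)^+k))).
  rewrite ler_sqrt ?Q_bound //; apply: mulr_ge0; first exact: BB_ge0.
  by apply: exprn_ge0; exact: sqr_ge0.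
rewrite sqrtrM; last exact: BB_ge0.
by rewrite exprAC sqrtr_sqr ger0_norm // exprn_ge0 // w_ge0.
Qed.

Lemma w_lt1 : w < 1.
Proof. rewrite /w expR_lt1 oppr_lt0; have := cc_gt0; lra. Qed.

Lemma r_cvg0 : r n @[n --> \oo] --> 0.
Proof.
have hg := @cvg_geometric R KK w.
have nw : `|w| < 1 by rewrite ger0_norm ?w_ge0 // w_lt1.
move: (hg nw) => {}hg.
apply/cvgrPdist_lt => e e0; move/cvgrPdist_lt : hg => /(_ e e0); apply: filterS => n /=.
rewrite !sub0r !normrN (ger0_norm (r_ge0 n)) => h; apply: le_lt_trans h.
by apply: le_trans (r_bound n) _; exact: ler_norm.
Qed.

Lemma psum n m : (n <= m)%N -> \sum_(n <= j < m) p j = r n - r m.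
Proof.
move=> nm; rewrite /p.
under eq_bigr do rewrite -opprB.
by rewrite sumrN telescope_sumr // opprB.
Qed.

Lemma tail_p n : (\sum_(n <= j <oo) (p j)%:E = (r n)%:E)%E.
Proof.
apply/cvg_lim => //.
apply: (@cvg_trans _ ((fun m => (r n - r m)%:E) @ \oo)).
  apply: near_eq_cvg; near=> m; rewrite sumEFin psum //.
  near: m; exact: nbhs_infty_ge.
have := cvgB (cvg_cst (r n)) r_cvg0; rewrite subr0 => h.
apply: (@cvg_EFin _ _ _ _ (fun m => (r n - r m)%:E) (r n)); last exact: h.
by apply: nearW.
Unshelve. all: by end_near.
Qed.

Lemma sum_p : (\sum_(0 <= j <oo) (p j)%:E = 1)%E.
Proof. by rewrite tail_p r0. Qed.


Definition vv := expR (cc / 4) * w.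

Lemma vv_gt0 : 0 < vv. Proof. by rewrite /vv mulr_gt0 ?expR_gt0. Qed.
Lemma vv_lt1 : vv < 1.
Proof. rewrite /vv /w -expRD expR_lt1; have := cc_gt0; lra. Qed.

Lemma light_sum : (\sum_(k <oo) (expR (cc / 4 * k%:R) * p k)%:E < +oo)%E.
Proof.
have pr k : p k <= r k by rewrite /p; have := r_ge0 k.+1; lra.
apply: (@le_lt_trans _ _ (\sum_(k <oo) (KK * vv ^+ k)%:E)%E).
  apply: lee_nneseries => [k _ _|k _].
    by rewrite lee_fin mulr_ge0 ?expR_ge0 ?p_ge0.
  rewrite lee_fin (mulrC (cc / 4)) expRM_natl.
  rewrite /vv exprMn mulrCA; apply: ler_wpM2l; first by apply: exprn_ge0; exact: expR_ge0.
  exact: le_trans (pr k) (r_bound k).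
apply: (@le_lt_trans _ _ (KK / (1 - vv))%:E); last by rewrite ltey.
apply: lime_le.
  apply: is_cvg_ereal_nneg_natsum => k _; rewrite lee_fin mulr_ge0 ?KK_ge0 //.
  by apply: exprn_ge0; exact: ltW vv_gt0.
apply: nearW => m; rewrite sumEFin lee_fin.
have nv : `|vv| < 1 by rewrite ger0_norm ?vv_lt1 // ltW // vv_gt0.
exact: (geometric_le_lim m KK_ge0 vv_gt0 nv).
Qed.

Lemma series_single (f : nat -> \bar R) n : (forall k, (0 <= f k)%E) ->
  (\sum_(k <oo) (if k == n then f k else 0) = f n)%E.
Proof.
move=> f0; rewrite (@nneseriesD1 _ _ n xpredT) //=; last by move=> k _; case: ifP.
rewrite eqxx eseries0 ?adde0 // => k _ /negbTE ->; done.
Qed.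

Lemma series_from (f : nat -> \bar R) n :
  (\sum_(k <oo) (if (n <= k)%N then f k else 0) = \sum_(n <= k <oo) f k)%E.
Proof. by rewrite -eseries_mkcond ereal_series. Qed.

Lemma KI n : (\sum_(i <oo) \sum_(j <oo)
   (if minn i j == n then (p i * p j)%:E else 0) = (q n)%:E)%E.
Proof.
have inner i : (\sum_(j <oo) (if minn i j == n then (p i * p j)%:E else 0) =
   if (i < n)%N then 0 else if i == n then (p n * r n)%:E else (p i * p n)%:E)%E.
  case: (ltngtP i n) => [lt|gt|->].
  - rewrite eseries0 // => j _ _; rewrite ifF //; apply/negbTE.
    by rewrite neq_ltn (leq_ltn_trans (geq_minl i j) lt).
  - rewrite (@eq_eseriesr _ _ (fun j => if j == n then (p i * p j)%:E else 0)).
      by rewrite series_single // => k; rewrite lee_fin mulr_ge0 ?p_ge0.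
    move=> j _; case: (leqP i j) => ij.
      by rewrite (gtn_eqF gt) ifF //; apply/negbTE; rewrite gtn_eqF // (leq_trans gt ij).
    by [].
  - rewrite (@eq_eseriesr _ _ (fun j => if (n <= j)%N then (p n * p j)%:E else 0)); last first.
      by move=> j _; case: (leqP n j) => nj; rewrite ?eqxx // ltn_eqF.
    rewrite series_from.
    under eq_eseriesr do rewrite EFinM.
    by rewrite nneseriesZl ?tail_p -?EFinM // => k _; rewrite lee_fin p_ge0.
rewrite (eq_eseriesr (fun i _ => inner i)).
rewrite (@nneseriesD1 _ _ n xpredT) //; last first.
  move=> k _; case: ifP => _ //; case: ifP => _; rewrite lee_fin mulr_ge0 ?p_ge0 ?r_ge0 //.
rewrite ltnn eqxx /=.
rewrite eseries_mkcond.
rewrite (@eq_eseriesr _ _ (fun k => if (n.+1 <= k)%N then ((p n)%:E * (p k)%:E)%E else 0)); last first.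
  move=> k _; case: (ltngtP k n) => kn //=.
  by rewrite mulrC EFinM.
rewrite series_from nneseriesZl ?tail_p; last by move=> k _; rewrite lee_fin p_ge0.
by rewrite -EFinM -EFinD q_p mulrDr.
Qed.


Local Notation TT := (T * (nat * nat))%type.

Definition emb (i j : nat) (t : T) : TT := (t, (i, j)).

Lemma memb i j : measurable_fun setT (emb i j).
Proof. by apply: measurable_fun_pair => //; exact: measurable_cst. Qed.

Lemma mpre i j (A : set TT) : measurable A -> measurable (emb i j @^-1` A `&` D (minn i j)).
Proof.
move=> mA; apply: measurableI; last exact: mD.
by rewrite -[X in measurable X]setTI; apply: memb.
Qed.

Definition nu (i j : nat) (A : set TT) : \bar R :=
  ((c i j)%:E * P (emb i j @^-1` A `&` D (minn i j)))%E.

Lemma nu0 i j : nu i j set0 = 0%E.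
Proof. by rewrite /nu preimage_set0 set0I measure0 mule0. Qed.

Lemma nu_ge0 i j A : (0 <= nu i j A)%E.
Proof. by rewrite /nu mule_ge0 // lee_fin c_ge0. Qed.

Lemma nu_sa i j : semi_sigma_additive (nu i j).
Proof.
move=> F mF tF mUF.
rewrite [X in X @ \oo --> _](_ : _ = (fun n => (c i j)%:E *
    \sum_(0 <= k < n) P (emb i j @^-1` F k `&` D (minn i j)))%E); last first.
  by apply/funext => n; rewrite ge0_sume_distrr // => k _; exact: measure_ge0.
rewrite /nu preimage_bigcup setI_bigcupl.
apply: cvgeZl => //.
apply: measure_semi_sigma_additive.
- by move=> k; apply: mpre.
- apply/trivIsetP => a b _ _ ab.
  move/trivIsetP : tF => /(_ a b Logic.I Logic.I ab) h.
  by rewrite setIACA setIid -preimage_setI h preimage_set0 set0I.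
- rewrite -setI_bigcupl -preimage_bigcup; exact: mpre.
Qed.

HB.instance Definition _ i j := isMeasure.Build _ _ _ (nu i j)
  (nu0 i j) (nu_ge0 i j) (@nu_sa i j).

Definition M := mseries (fun i => mseries (fun j => (nu i j : {measure set TT -> \bar R})) 0) 0.

Lemma ME A : M A = (\sum_(i <oo) \sum_(j <oo) nu i j A)%E.
Proof. by []. Qed.


Lemma M_marg B : measurable B -> M (B `*` setT) = P B.
Proof.
move=> mB.
have pre i j : emb i j @^-1` (B `*` setT) = B.
  by apply/seteqP; split => t /=; [case|].
rewrite ME.
pose g n := P (B `&` D n).
have mBD n : measurable (B `&` D n) by apply: measurableI => //; exact: mD.
have fg n : g n \is a fin_num by rewrite fin_num_measure //; exact: mBD.
have g0 n : (0 <= g n)%E by apply: measure_ge0; apply: measurableI => //; exact: mD.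
pose h i j n := if n == minn i j then ((c i j)%:E * g n)%E else 0%E.
have h0 i j n : (0 <= h i j n)%E.
  by rewrite /h; case: ifP => _ //; rewrite mule_ge0 // lee_fin c_ge0.
have step i j : nu i j (B `*` setT) = (\sum_(n <oo) h i j n)%E.
  by rewrite /h series_single; [rewrite /nu pre|move=> k; rewrite mule_ge0 // lee_fin c_ge0].
rewrite (@eq_eseriesr _ _ (fun i => \sum_(n <oo) \sum_(j <oo) h i j n)%E); last first.
  move=> i _; transitivity (\sum_(j <oo) \sum_(n <oo) h i j n)%E.
    by apply: eq_eseriesr => j _; exact: step.
  by rewrite nneseries_interchange.
rewrite nneseries_interchange; last by move=> i n; apply: nneseries_ge0 => j _.
have key n : (\sum_(i <oo) \sum_(j <oo) h i j n)%E = g n.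
  rewrite -[RHS](fineK (fg n)).
  rewrite (@eq_eseriesr _ _ (fun i => (fine (g n))%:E * \sum_(j <oo) (if minn i j == n then (c i j)%:E else 0))%E); last first.
    move=> i _; rewrite -nneseriesZl; last by move=> j _; case: ifP => _ //; rewrite lee_fin c_ge0.
    apply: eq_eseriesr => j _; rewrite /h eq_sym; case: ifP => _; last by rewrite mule0.
    by rewrite fineK // muleC.
  rewrite nneseriesZl; last by move=> i _; apply: nneseries_ge0 => j _; case: ifP => _ //; rewrite lee_fin c_ge0.
  have [qn|qn] := eqVneq (q n) 0.
    have -> : g n = 0%E.
      apply/le_anti; rewrite g0 andbT.
      have : (g n <= P (D n))%E.
        by apply: le_measure; rewrite ?inE; [exact: mBD|exact: mD|exact: subIsetr].
      by rewrite PD qn.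
    by rewrite /= !mul0e.
  rewrite (@eq_eseriesr _ _ (fun i => ((q n)^-1)%:E * \sum_(j <oo) (if minn i j == n then (p i * p j)%:E else 0))%E); last first.
    move=> i _; rewrite -nneseriesZl; last by move=> j _; case: ifP => _ //; rewrite lee_fin mulr_ge0 ?p_ge0.
    apply: eq_eseriesr => j _; case: ifP => /eqP hm; last by rewrite mule0.
    by rewrite -EFinM /c hm mulrC.
  rewrite nneseriesZl; last by move=> i _; apply: nneseries_ge0 => j _; case: ifP => _ //; rewrite lee_fin mulr_ge0 ?p_ge0.
  by rewrite KI -EFinM mulVf // mulr1.
rewrite (@eq_eseriesr _ _ g); last by move=> n _; exact: key.
have -> : B = \bigcup_n (B `&` D n).
  by apply/seteqP; split => t; [move=> Bt; exists (Nf t)|move=> [n _ []]].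
have tI : trivIset setT (fun n => B `&` D n).
  apply/trivIsetP => a b _ _ ab; apply/seteqP; split => t //= [[_ Da] [_ Db]].
  by move: ab; rewrite /D in Da Db; rewrite -Da -Db eqxx.
rewrite (measure_bigcup P setT (fun n => B `&` D n) (fun n _ => mBD n) tI).
rewrite [RHS]eseries_mkcond; apply: eq_eseriesr => n _.
by rewrite in_setT.
Qed.


Definition xi (w : TT) : R := (w.2.1)%:R.
Definition eta (w : TT) : R := (w.2.2)%:R.
Definition mu (A : set R) : \bar R := (\sum_(i <oo) (if i%:R \in A then (p i)%:E else 0))%E.

Lemma mu_ge0 A : (0 <= mu A)%E.
Proof. by apply: nneseries_ge0 => i _; case: ifP => _ //; rewrite lee_fin p_ge0. Qed.

Lemma mu_le1 A : (mu A <= 1)%E.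
Proof.
rewrite -sum_p; apply: lee_nneseries => [i _ _|i _]; case: ifP => _ //; rewrite lee_fin ?p_ge0 //.
Qed.

Lemma mu_fin A : mu A \is a fin_num.
Proof. by rewrite ge0_fin_numE ?mu_ge0 // (le_lt_trans (mu_le1 A)) // ltey. Qed.

Lemma mu_setT : mu setT = 1%E.
Proof. by rewrite -sum_p; apply: eq_eseriesr => i _; rewrite in_setT. Qed.

Lemma M_prod A B : M (xi @^-1` A `&` eta @^-1` B) = (mu A * mu B)%E.
Proof.
rewrite ME.
have term i j : nu i j (xi @^-1` A `&` eta @^-1` B) =
    if (i%:R \in A) && (j%:R \in B) then (p i * p j)%:E else 0%E.
  rewrite /nu; case: ifPn => [/andP[hA hB]|hAB].
    rewrite (_ : _ `&` _ = D (minn i j)); first by rewrite PD -EFinM c_q.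
    apply/seteqP; split => t; first by case.
    by move=> Dt; split => //; split; exact/set_mem.
  rewrite (_ : _ `&` _ = set0); first by rewrite measure0 mule0.
  apply/seteqP; split => t // [[/= hA hB] _]; move: hAB.
  by rewrite (mem_set hA) (mem_set hB).
transitivity (\sum_(i <oo) ((if i%:R \in A then (p i)%:E else 0) * mu B))%E.
  apply: eq_eseriesr => i _.
  transitivity (\sum_(j <oo) (if (i%:R \in A) && (j%:R \in B) then (p i * p j)%:E else 0%E))%E.
    by apply: eq_eseriesr => j _; exact: term.
  case: ifPn => hA /=.
    rewrite /mu -nneseriesZl; last by move=> j _; case: ifP => _ //; rewrite lee_fin p_ge0.
    by apply: eq_eseriesr => j _; case: ifP => _; [rewrite EFinM|rewrite mule0].
  by rewrite mul0e eseries0.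
rewrite -(fineK (mu_fin B)).
under eq_eseriesr do rewrite muleC.
rewrite nneseriesZl; last by move=> i _; case: ifP => _ //; rewrite lee_fin p_ge0.
by rewrite muleC.
Qed.

Lemma meas_nat2 (S : set (nat * nat)) : measurable S.
Proof.
rewrite (_ : S = \bigcup_i ([set i] `*` [set j | S (i, j)])).
  by apply: bigcupT_measurable => i; apply: measurableX.
apply/seteqP; split => [[i j] Sij|[i j] [k _ [/= ik h]]]; first by exists i.
by rewrite ik.
Qed.

Lemma mnatR : measurable_fun setT (fun k : nat => (k%:R : R)).
Proof. by move=> _ Z _. Qed.

Lemma mxi : measurable_fun setT xi.
Proof. exact: (measurableT_comp mnatR (measurableT_comp measurable_fst measurable_snd)). Qed.

Lemma meta : measurable_fun setT eta.
Proof. exact: (measurableT_comp mnatR (measurableT_comp measurable_snd measurable_snd)). Qed.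

Definition N0 := [set w : TT | minn w.2.1 w.2.2 != Nf w.1].

Lemma mN0 : measurable N0.
Proof.
rewrite (_ : N0 = \bigcup_n (D n `*` [set ij : nat * nat | minn ij.1 ij.2 != n])).
  by apply: bigcupT_measurable => n; apply: measurableX; [exact: mD|exact: meas_nat2].
apply/seteqP; split => [[t [i j]] /= h|[t [i j]] [n _ [/= Dt h]]].
  by exists (Nf t) => //.
by rewrite /N0 /=; move: Dt; rewrite /D /= => ->.
Qed.

Lemma M_N0 : M N0 = 0%E.
Proof.
rewrite ME eseries0 // => i _ _; rewrite eseries0 // => j _ _.
rewrite /nu (_ : _ `&` _ = set0) ?measure0 ?mule0 //.
apply/seteqP; split => t // [h Dt]; move: h; rewrite /D /= in Dt.
by rewrite /N0 /emb /= Dt eqxx.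
Qed.

Definition P' := mnormalize M (@dirac _ TT point R).

Lemma M_setT : M setT = 1%E.
Proof. by rewrite -setXTT M_marg // probability_setT. Qed.

Lemma mnormE (m : {measure set TT -> \bar R}) (P0 : probability TT R) A :
  m setT = 1%E -> mnormalize m P0 A = m A.
Proof.
move=> m1; rewrite /mnormalize m1 /=.
rewrite (_ : (1%E == 0%E) = false) /=; last by apply/negbTE; rewrite eqe oner_neq0.
by rewrite (_ : ((1 : R)^-1)%:E = 1%E) ?mule1 // invr1.
Qed.

Lemma P'E A : P' A = M A.
Proof.
exact: (@mnormE (M : {measure set TT -> \bar R}) _ A M_setT).
Qed.

Lemma P'_sing k : P' (xi @^-1` [set k%:R] `&` eta @^-1` setT) = (p k)%:E.
Proof.
rewrite P'E M_prod mu_setT mule1 /mu.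
rewrite (@eq_eseriesr _ _ (fun i => if i == k then (p i)%:E else 0%E)).
  by rewrite series_single // => i; rewrite lee_fin p_ge0.
move=> i _; case: (eqVneq i k) => [->|ik]; first by rewrite mem_set.
rewrite memNset // => /eqP; rewrite eqr_nat; exact/negP.
Qed.

Lemma light_xi : (\int[P']_w (expR (cc / 4 * xi w))%:E < +oo)%E.
Proof.
pose S k := xi @^-1` [set k%:R] `&` eta @^-1` setT.
have mS k : measurable (S k).
  apply: measurableI.
    by rewrite -[X in measurable X]setTI; apply: mxi.
  by rewrite -[X in measurable X]setTI; apply: meta.
rewrite (_ : (fun w => (expR (cc / 4 * xi w))%:E) =
   fun w => (\sum_(k <oo) (expR (cc / 4 * k%:R) * \1_(S k) w)%:E)%E); last first.
  apply/funext => w.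
  rewrite (@eq_eseriesr _ _ (fun k => if k == w.2.1 then (expR (cc / 4 * k%:R))%:E else 0%E)).
    by rewrite series_single // => k; rewrite lee_fin expR_ge0.
  move=> k _; rewrite indicE; case: (eqVneq k w.2.1) => [->|kw].
    by rewrite mem_set ?mulr1 //.
  by rewrite memNset ?mulr0 //; move=> [/= /eqP]; rewrite eqr_nat eq_sym (negbTE kw).
rewrite integral_nneseries //; last first.
  move=> k; apply/measurable_realfun.measurable_EFinP.
  exact: (measurableT_comp (measurable_realfun.mulrl_measurable _) (measurable_realfun.measurable_indic (mS k))).
rewrite (@eq_eseriesr _ _ (fun k => (expR (cc / 4 * k%:R) * p k)%:E)); first exact: light_sum.
move=> k _.
rewrite (@integralZl_indic _ _ _ P' _ measurableT (fun _ => S k)) //; last first.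
  by move=> h; exfalso; move: h; rewrite ltNge expR_ge0.
rewrite integral_indic // setIT EFinM; congr (_ * _)%E; exact: P'_sing.
Qed.


Lemma P'_prod A B : P' (xi @^-1` A `&` eta @^-1` B) = (mu A * mu B)%E.
Proof. by rewrite P'E M_prod. Qed.

Lemma P'_xi A : P' (xi @^-1` A) = mu A.
Proof. by rewrite -[xi @^-1` A]setIT -(preimage_setT eta) P'_prod mu_setT mule1. Qed.

Lemma P'_eta A : P' (eta @^-1` A) = mu A.
Proof. by rewrite -[eta @^-1` A]setTI -(preimage_setT xi) P'_prod mu_setT mul1e. Qed.

Lemma main_sec : exists (d' : measure_display) (T' : measurableType d') (P'' : probability T' R)
         (X' Y' xi' eta' : T' -> R),
    [/\ measurable_fun setT X', measurable_fun setT Y',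
        measurable_fun setT xi' & measurable_fun setT eta'] /\
    same_joint_law P X Y P'' X' Y' /\
    indep2 P'' xi' eta' /\ ident_distr P'' xi' eta' /\ light_tailed P'' xi' /\
    {ae P'', forall t, Num.max (X' t) (Y' t) <= Num.min (xi' t) (eta' t)}.
Proof.
exists _, _, P', (X \o fst), (Y \o fst), xi, eta.
split.
  split; [exact: measurableT_comp mX measurable_fst|exact: measurableT_comp mY measurable_fst|exact: mxi|exact: meta].
split.
  move=> A mA.
  have e : (fun t => ((X \o fst) t, (Y \o fst) t)) @^-1` A = ((fun t => (X t, Y t)) @^-1` A) `*` [set: nat * nat].
    by apply/seteqP; split => -[t ij] /=; [move=> h; split|case].
  have mA' : measurable ((fun t => (X t, Y t)) @^-1` A).
    by rewrite -[Z in measurable Z]setTI; exact: (measurable_fun_pair mX mY measurableT mA).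
  rewrite e; transitivity (M (((fun t => (X t, Y t)) @^-1` A) `*` [set: nat * nat])).
    exact: P'E.
  exact: M_marg.
split.
  move=> A B _ _.
  transitivity (mu A * mu B)%E; first exact: P'_prod.
  have h2 := P'_xi A; have h3 := P'_eta B.
  by rewrite -h2 -h3.
split.
  move=> A _; transitivity (mu A); first exact: P'_xi.
  exact/esym/P'_eta.
split.
  exists (cc / 4); split; last exact: light_xi.
  by rewrite divr_gt0 // cc_gt0.
exists N0; split.
- exact: mN0.
- transitivity (M N0); first exact: P'E.
  exact: M_N0.
- move=> [t [i j]] /= hnot; rewrite /N0 /=; apply/negP => /eqP hm.
  apply: hnot; rewrite /xi /eta /= le_min; apply/andP; split;
    apply: le_trans (Nf_ge t) _; by rewrite ler_nat -hm ?geq_minl ?geq_minr.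
Qed.

End Construction.

Theorem mainTheorem12 (R : realType) (d : measure_display) (T : measurableType d)
  (P : probability T R) (X Y : T -> R)
  (mX : measurable_fun setT X) (mY : measurable_fun setT Y)
  (hX : light_tailed P X) (hY : light_tailed P Y) :
  exists (d' : measure_display) (T' : measurableType d') (P' : probability T' R)
         (X' Y' xi eta : T' -> R),
    [/\ measurable_fun setT X', measurable_fun setT Y',
        measurable_fun setT xi & measurable_fun setT eta] /\
    same_joint_law P X Y P' X' Y' /\
    indep2 P' xi eta /\ ident_distr P' xi eta /\ light_tailed P' xi /\
    {ae P', forall t, Num.max (X' t) (Y' t) <= Num.min (xi t) (eta t)}.
Proof.
case: hX => c1 [c1pos EX]; case: hY => c2 [c2pos EY].
have h := @main_sec R d T P X Y mX mY c1 c2 c1pos c2pos EX EY.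
exact h.
Qed.
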